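(* Let $N\ge 2$ be an integer. There exist a nonempty open convex set $C\subset\mathbb{R}^{N-2}$ and a continuous injective map $\Phi\colon C\to\mathbb{R}^{(N-1)\times(N-1)}$ such that for every $w\in C$ the matrix $H=\Phi(w)$ is lower triangular and the following holds: for every $d\ge1$, every nonexpansive $\mathbb{T}\colon\mathbb{R}^d\to\mathbb{R}^d$, every $y_0\in\mathbb{R}^d$ and every $y_\star\in\mathrm{Fix}\,\mathbb{T}$, the iterates defined by \[ y_{k+1} = y_k - \sum_{j=0}^{k} h_{k+1,j+1}\,(y_j - \mathbb{T}y_j), \qquad k=0,1,\dots,N-2, \] where $h_{k,j}$ denotes the $(k,j)$ entry of $H$, satisfy \[ \|y_{N-1}-\mathbb{T}y_{N-1}\|^2 \le \frac{4\|y_0-y_\star\|^2}{N^2}. \]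
   Context: $\mathbb{T}$ is nonexpansive if it is $1$-Lipschitz; $\mathrm{Fix}\,\mathbb{T}=\{y: y=\mathbb{T}y\}$. Rows and columns of $(N-1)\times(N-1)$ matrices are indexed $1,\dots,N-1$. *)

(* Defs.v *)
From HB Require Import structures.
From mathcomp Require Import all_boot all_order all_algebra.
From mathcomp Require Import all_classical all_reals all_analysis.
Set Implicit Arguments. Unset Strict Implicit. Unset Printing Implicit Defensive.
Import Order.TTheory GRing.Theory Num.Theory numFieldNormedType.Exports.
Local Open Scope ring_scope.
Local Open Scope classical_set_scope.

Definition convex_rV (R : realType) (n : nat) (C : set 'rV[R]_n) : Prop :=
  forall x y (t : R), C x -> C y -> 0 <= t -> t <= 1 ->
    C (t *: x + (1 - t) *: y).

Definition sqnorm (R : realType) (d : nat) (v : 'rV[R]_d) : R :=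
  \sum_(i < d) (v ord0 i) ^+ 2.
Definition enorm (R : realType) (d : nat) (v : 'rV[R]_d) : R :=
  Num.sqrt (sqnorm v).

Definition nonexpansive (R : realType) (d : nat) (T : 'rV[R]_d -> 'rV[R]_d) :=
  forall x y, enorm (T x - T y) <= enorm (x - y).

Definition lower_triangular (R : realType) (n : nat) (H : 'M[R]_n) :=
  forall i j : 'I_n, (i < j)%N -> H i j = 0.

(* Main.v *)
Require Import Defs.
From HB Require Import structures.
From mathcomp Require Import all_boot all_order all_algebra.
From mathcomp Require Import all_classical all_reals all_analysis.
From mathcomp Require Import ring lra zify.
Import Order.TTheory GRing.Theory Num.Theory numFieldNormedType.Exports.
Local Open Scope ring_scope.
Local Open Scope classical_set_scope.

Section Core.
Variable R : realType.
Lemma nonexp_ineq (d : nat) (T : 'rV[R]_d -> 'rV[R]_d) (hT : nonexpansive T)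
  (x z : 'rV[R]_d) :
  0 <= \sum_(i < d) (((x ord0 i - T x ord0 i) - (z ord0 i - T z ord0 i)) *
                     (x ord0 i - z ord0 i)
                   - ((x ord0 i - T x ord0 i) - (z ord0 i - T z ord0 i))^+2 / 2).
Proof.
have H := hT x z; rewrite /enorm in H.
have h1 : sqnorm (T x - T z) <= sqnorm (x - z).
  by rewrite -ler_sqrt // /sqnorm; apply: sumr_ge0 => i _; apply: sqr_ge0.
have -> : \sum_(i < d) (((x ord0 i - T x ord0 i) - (z ord0 i - T z ord0 i)) *
                     (x ord0 i - z ord0 i)
                   - ((x ord0 i - T x ord0 i) - (z ord0 i - T z ord0 i))^+2 / 2)
   = (sqnorm (x - z) - sqnorm (T x - T z)) / 2.
  rewrite /sqnorm -sumrB mulr_suml; apply: eq_bigr => i _; rewrite !mxE.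
  by field.
by apply: divr_ge0 => //; rewrite subr_ge0.
Qed.

Definition Vpot (k a b g U e : R) : R :=
  (2*a^+2 - a*b)*g^+2 + 2*(b-a)*g*U + 2*a*(k + b - 2*a)*g*e
  + (k*(k+1) + 2*a^+2 - a*b - 2*k*a)*e^+2 + 2*(1-b+a)*e*U.

Lemma step_id (k a b c g g' e U U' X X' : R) :
  a * X = U -> b * X' = U' -> U' = U - a*(g-e) - (k+1)*e ->
  2*a*b*((g'-g)*(X'-X) - (g'-g)^+2/2) + 2*b*(2*b-a-c)*((g'-e)*X' - (g'-e)^+2/2)
  = Vpot k a b g U e - Vpot (k+1) b c g' U' e.
Proof.
move=> hX hX' hU.
have -> : 2*a*b*((g'-g)*(X'-X) - (g'-g)^+2/2) + 2*b*(2*b-a-c)*((g'-e)*X' - (g'-e)^+2/2)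
  = 2*(g'-g)*(a*(b*X') - b*(a*X)) - a*b*(g'-g)^+2
    + 2*(2*b-a-c)*((g'-e)*(b*X') - b/2*(g'-e)^+2) by field; rewrite ?pnatr_eq0.
rewrite hX hX' hU /Vpot; by field.
Qed.

End Core.

Section Fam.
Variables (R : realType) (N : nat).

Definition wc (w : 'rV[R]_(N - 2)) (i : nat) : R :=
  if insub i is Some i' then w ord0 i' else 0.
Definition Wf (w : 'rV[R]_(N - 2)) (j : nat) : R :=
  if j == 0%N then 0 else if (j < N - 1)%N then wc w j.-1
  else if j == (N - 1)%N then N%:R else N%:R + 1.
Definition Dn w (k j : nat) : R :=
  if j == 0%N then (k * k.+1)%:R / 2 - \sum_(i < k) Wf w i
  else if (j < k)%N then Wf w j else 0.
Definition Cf w (k j : nat) : R := if k == 0%N then 0 else Dn w k j / Wf w k.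
Definition hf w (k j : nat) : R := Cf w k.+1 j - Cf w k j.
Definition Phi w : 'M[R]_(N - 1) := \matrix_(k, j) hf w k j.

Lemma hf_up w (k j : nat) : (k < j)%N -> hf w k j = 0.
Proof.
move=> kj; rewrite /hf /Cf /Dn.
have j0 : (j == 0%N) = false by apply/negbTE; rewrite -lt0n (leq_ltn_trans _ kj).
have -> : (j < k.+1)%N = false by apply/negbTE; rewrite -leqNgt.
have -> : (j < k)%N = false by apply/negbTE; rewrite -leqNgt ltnW.
by rewrite j0 /=; case: (k == 0%N); rewrite ?mul0r ?subr0.
Qed.

Lemma Dn0 w j : Dn w 0 j = 0.
Proof. by rewrite /Dn big_ord0 mul0n mul0r subr0; case: (j == 0%N). Qed.

Lemma W0 w : Wf w 0 = 0.
Proof. by []. Qed.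


Lemma Dn_step w k j : Dn w k.+1 j - Dn w k j =
  if j == 0%N then k.+1%:R - Wf w k else if j == k then Wf w k else 0.
Proof.
rewrite /Dn; case: eqP => [_|/eqP j0].
  by rewrite big_ord_recr /= !natrM -!natr1; field.
rewrite ltnS leq_eqVlt; case: eqP => [->|_] /=; first by rewrite ltnn subr0.
by case: (j < k)%N; rewrite subrr.
Qed.

Section Traj.
Variables (w : 'rV[R]_(N - 2)) (Y G : nat -> R).
Hypothesis rec : forall k, (k < N - 1)%N ->
  Y k.+1 = Y k - \sum_(j < N - 1) hf w k j * G j.

Lemma trajC k : (k <= N - 1)%N -> Y k - Y 0%N = - \sum_(j < N - 1) Cf w k j * G j.
Proof.
elim: k => [|k IH] hk.
  by rewrite subrr big1 ?oppr0 // => j _; rewrite /Cf eqxx mul0r.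
have hk' : (k < N - 1)%N by [].
have IH' := IH (ltnW hk').
have -> : Y k.+1 - Y 0%N = (Y k - Y 0%N) - \sum_(j < N - 1) hf w k j * G j.
  by rewrite (rec k hk'); ring.
rewrite IH' -opprD -big_split /=; congr (- _); apply: eq_bigr => j _.
by rewrite /hf mulrBl addrC subrK.
Qed.

Definition Uf k : R := - \sum_(j < N - 1) Dn w k j * G j.

Hypothesis Wnz : forall k, (0 < k <= N - 1)%N -> Wf w k != 0.

Lemma trajU k : (k <= N - 1)%N -> Wf w k * (Y k - Y 0%N) = Uf k.
Proof.
move=> hk; rewrite trajC // /Uf mulrN mulr_sumr; congr (- _).
apply: eq_bigr => j _; rewrite mulrA; congr (_ * _).
rewrite /Cf; case: eqP => [->|/eqP k0]; first by rewrite Dn0 mulr0.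
by rewrite mulrC divfK // Wnz // lt0n k0.
Qed.


Lemma Uf_step k : (k < N - 1)%N ->
  Uf k.+1 = Uf k - Wf w k * (G k - G 0%N) - k.+1%:R * G 0%N.
Proof.
move=> hk.
have h0 : (0 < N - 1)%N by apply: leq_ltn_trans hk.
have -> : Uf k.+1 = Uf k - \sum_(j < N - 1) (Dn w k.+1 j - Dn w k j) * G j.
  by rewrite /Uf -opprD -big_split /=; congr (- _); apply: eq_bigr => j _; ring.
under eq_bigr => j _ do rewrite Dn_step.
rewrite (bigD1 (Ordinal h0)) //=.
case: (posnP k) => [k0|kpos].
  rewrite big1 ?addr0; last first.
    move=> j /negbTE hj.
    have -> : (nat_of_ord j == 0%N) = false by [].
    by rewrite k0 /=; case: eqP => // _; rewrite mul0r.
  rewrite k0 W0; ring.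
rewrite (bigD1 (Ordinal hk)) /=; last first.
  by apply/eqP => /(congr1 val) /= kz; move: kpos; rewrite kz.
rewrite eqxx (negbTE (_ : k != 0%N)); last by rewrite -lt0n.
rewrite big1 ?addr0; first by ring.
move=> j /andP [hj1 hj2].
have -> : (nat_of_ord j == 0%N) = false.
  by apply/negbTE; apply: contra hj1 => /eqP jz; apply/eqP/val_inj.
have -> : (nat_of_ord j == k) = false.
  by apply/negbTE; apply: contra hj2 => /eqP jz; apply/eqP/val_inj.
by rewrite mul0r.
Qed.

End Traj.

Lemma WfN1 w : (2 <= N)%N -> Wf w (N - 1) = N%:R.
Proof.
move=> hN; rewrite /Wf ltnn eqxx.
by have -> : (N - 1 == 0)%N = false by apply/negbTE; apply/eqP; lia.
Qed.

Lemma WfN w : (2 <= N)%N -> Wf w N = N%:R + 1.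
Proof.
move=> hN; rewrite /Wf.
have -> : (N == 0)%N = false by apply/negbTE; apply/eqP; lia.
have -> : (N < N - 1)%N = false by apply/negbTE; lia.
by have -> : (N == N - 1)%N = false by apply/negbTE; apply/eqP; lia.
Qed.

Lemma core w (hN : (2 <= N)%N)
  (Wpos : forall j, (0 < j <= N)%N -> 0 < Wf w j)
  (conc : forall k, (k < N - 1)%N -> Wf w k + Wf w k.+2 <= 2 * Wf w k.+1)
  (d : nat) (T : 'rV[R]_d -> 'rV[R]_d) (y : nat -> 'rV[R]_d) (ystar : 'rV[R]_d) :
  nonexpansive T -> T ystar = ystar ->
  (forall k : 'I_(N - 1),
     y k.+1 = y k - \sum_(j < N - 1 | (j <= k)%N) Phi w k j *: (y j - T (y j))) ->
  sqnorm (y (N - 1)%N - T (y (N - 1)%N)) <= 4 * sqnorm (y 0%N - ystar) / (N%:R ^+ 2).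
Proof.
move=> hT hfix hrec.
set n := (N - 1)%N.
have n0 : (0 < n)%N by rewrite /n subn_gt0.
pose Yc (i : 'I_d) k := y k ord0 i.
pose Gc (i : 'I_d) k := y k ord0 i - T (y k) ord0 i.
have reci : forall i k, (k < N - 1)%N ->
    Yc i k.+1 = Yc i k - \sum_(j < N - 1) hf w k j * Gc i j.
  move=> i k hk; have := hrec (Ordinal hk); move/(congr1 (fun M : 'rV[R]_d => M ord0 i)).
  rewrite /Yc /Gc => ->; rewrite !mxE summxE /=; congr (_ - _).
  rewrite big_mkcond /=; apply: eq_bigr => j _; rewrite !mxE.
  case: leqP => [//|kj]; by rewrite hf_up // mul0r.
have Wnz : forall k, (0 < k <= N - 1)%N -> Wf w k != 0.
  by move=> k /andP [k0 kn]; rewrite gt_eqF // Wpos //; apply/andP; split; lia.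
have Wge0 : forall j, (j <= N)%N -> 0 <= Wf w j.
  move=> j jN; case: (posnP j) => [->|jp]; first by rewrite W0.
  by apply: ltW; apply: Wpos; rewrite jp jN.
pose Vi i k := Vpot R (k%:R) (Wf w k) (Wf w k.+1) (Gc i k) (Uf w (Gc i) k) (Gc i 0%N).
pose Ii i k := (Gc i k.+1 - Gc i k) * (Yc i k.+1 - Yc i k) - (Gc i k.+1 - Gc i k)^+2/2.
pose Ji i k := (Gc i k.+1 - Gc i 0%N) * (Yc i k.+1 - Yc i 0%N) - (Gc i k.+1 - Gc i 0%N)^+2/2.
pose lam k := 2 * Wf w k * Wf w k.+1.
pose nu k := 2 * Wf w k.+1 * (2 * Wf w k.+1 - Wf w k - Wf w k.+2).
have step : forall i k, (k < n)%N -> lam k * Ii i k + nu k * Ji i k = Vi i k - Vi i k.+1.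
  move=> i k hk.
  have hX := trajU w (Yc i) (Gc i) (reci i) Wnz k (ltnW hk).
  have hX' := trajU w (Yc i) (Gc i) (reci i) Wnz k.+1 hk.
  have hU := Uf_step w (Gc i) k hk.
  rewrite -natr1 in hU.
  have := step_id R (k%:R) (Wf w k) (Wf w k.+1) (Wf w k.+2) (Gc i k) (Gc i k.+1) (Gc i 0%N)
    _ _ (Yc i k - Yc i 0%N) (Yc i k.+1 - Yc i 0%N) hX hX' hU.
  rewrite /Vi -[k.+1%:R]natr1 => <-; rewrite /lam /nu /Ii /Ji; ring.
have tot : 0 <= \sum_(i < d) - Vi i n.
  have -> : \sum_(i < d) - Vi i n = \sum_(k < n) (lam k * \sum_(i < d) Ii i k + nu k * \sum_(i < d) Ji i k).
    rewrite (eq_bigr (fun i => \sum_(k < n) (Vi i k - Vi i k.+1))); last first.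
      move=> i _.
      have := telescope_sumr (fun k => Vi i k) (leq0n n); rewrite big_mkord => tel.
      have V0 : Vi i 0%N = 0.
        rewrite /Vi /Uf big1 ?oppr0; last by move=> j _; rewrite Dn0 mul0r.
        rewrite W0 /Vpot; ring.
      rewrite -[RHS]opprK -sumrN.
      under eq_bigr do rewrite opprB.
      by rewrite tel V0 subr0.
    rewrite exchange_big /=; apply: eq_bigr => k _.
    rewrite !mulr_sumr -big_split /=; apply: eq_bigr => i _; rewrite step //.
  apply: sumr_ge0 => k _; have hk := ltn_ord k; have hn : n = (N - 1)%N by [].
  apply: addr_ge0; apply: mulr_ge0.
  - by rewrite /lam; apply: mulr_ge0; [apply: mulr_ge0 => //; apply: Wge0 |apply: Wge0]; lia.
  - exact: (nonexp_ineq R d T hT (y k.+1) (y k)).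
  - rewrite /nu; apply: mulr_ge0; [apply: mulr_ge0 => //; apply: Wge0; lia|].
    have hc : (k < N - 1)%N by lia.
    by have := conc k hc; lra.
  - exact: (nonexp_ineq R d T hT (y k.+1) (y 0%N)).
have nS : n.+1 = N by rewrite /n; lia.
have NR : (N%:R : R) != 0 by rewrite pnatr_eq0 -lt0n (leq_trans _ hN).
have nR : (n%:R : R) = N%:R - 1 by rewrite -nS -natr1 addrK.
have VN : forall i, Vi i n = N%:R * (N%:R - 1) * (Gc i n)^+2
                           + 2 * N%:R * Gc i n * (Yc i n - Yc i 0%N).
  move=> i; have hX := trajU w (Yc i) (Gc i) (reci i) Wnz n (leqnn n).
  rewrite /Vi -hX nS (WfN w hN) (WfN1 w hN) nR /Vpot; ring.
have Hst := nonexp_ineq R d T hT (y n) ystar.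
rewrite hfix in Hst.
have Hsq : 0 <= \sum_(i < d) (N%:R / 2 * Gc i n - (Yc i 0%N - ystar ord0 i))^+2.
  by apply: sumr_ge0 => i _; apply: sqr_ge0.
rewrite -subr_ge0.
have -> : 4 * sqnorm (y 0%N - ystar) / N%:R ^+ 2 - sqnorm (y n - T (y n))
  = 4 / N%:R^+2 * \sum_(i < d) (N%:R / 2 * Gc i n - (Yc i 0%N - ystar ord0 i))^+2
    + 2 / N%:R^+2 * \sum_(i < d) - Vi i n
    + 4 / N%:R * \sum_(i < d) ((y n ord0 i - T (y n) ord0 i - (ystar ord0 i - ystar ord0 i)) *
                (y n ord0 i - ystar ord0 i) -
                (y n ord0 i - T (y n) ord0 i - (ystar ord0 i - ystar ord0 i)) ^+ 2 / 2).
  rewrite /sqnorm !mulr_sumr mulr_suml -sumrB -!big_split /=.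
  by apply: eq_bigr => i _; rewrite VN /Gc /Yc !mxE; field.
apply: addr_ge0; [apply: addr_ge0|]; apply: mulr_ge0 => //.
Qed.


Definition nr : R := (N - 1)%:R.
Definition W0f (j : nat) : R := j%:R + j%:R * (2 * nr + 1 - j%:R) / (nr * (nr + 1)).
Definition w0 : 'rV[R]_(N - 2) := \row_(i < N - 2) W0f i.+1.
Definition eps : R := 1 / (4 * nr * (nr + 1)).

Section Box.
Hypothesis hN : (2 <= N)%N.

Lemma nr_ge1 : 1 <= nr.
Proof. by rewrite /nr ler1n; lia. Qed.

Lemma NRE : (N%:R : R) = nr + 1.
Proof. by rewrite /nr natr1; congr (_%:R); lia. Qed.

Lemma eps_gt0 : 0 < eps.
Proof. have := nr_ge1; rewrite /eps => h; apply: divr_gt0 => //; nra. Qed.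

Lemma W0f0 : W0f 0 = 0.
Proof. by rewrite /W0f mul0r mul0r add0r. Qed.

Lemma W0fn : W0f (N - 1) = N%:R.
Proof.
have := nr_ge1 => h; rewrite /W0f -/nr NRE; field; nra.
Qed.

Lemma W0fN : W0f N = N%:R + 1.
Proof.
have := nr_ge1 => h; rewrite /W0f NRE; field; nra.
Qed.

Lemma W0f_conc k : W0f k + W0f k.+2 - 2 * W0f k.+1 = - 2 / (nr * (nr + 1)).
Proof.
have := nr_ge1 => h; rewrite /W0f -!natr1; field; nra.
Qed.

Lemma W0f_ge1 j : (0 < j <= N)%N -> 1 <= W0f j.
Proof.
move=> /andP [j0 jN]; have := nr_ge1 => h.
have j1 : 1 <= (j%:R : R) by rewrite ler1n.
have jN' : (j%:R : R) <= nr + 1 by rewrite -NRE ler_nat.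
rewrite /W0f; suff : 0 <= j%:R * (2 * nr + 1 - j%:R) / (nr * (nr + 1)) by lra.
apply: divr_ge0; [apply: mulr_ge0; lra | nra].
Qed.

Lemma ball_coord (w : 'rV[R]_(N - 2)) : ball w0 eps w ->
  forall i, `|w0 ord0 i - w ord0 i| < eps.
Proof. move=> [_ H] i; exact: H. Qed.

Lemma wcE (w : 'rV[R]_(N - 2)) (i : 'I_(N - 2)) : wc w i = w ord0 i.
Proof. by rewrite /wc valK. Qed.

Lemma Wf_near (w : 'rV[R]_(N - 2)) : ball w0 eps w ->
  forall j, (j <= N)%N -> `|Wf w j - W0f j| <= eps.
Proof.
move=> hb j jN; have e0 := eps_gt0.
rewrite /Wf; case: eqP => [->|/eqP j0]; first by rewrite W0f0 subrr normr0 ltW.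
case: ltnP => [jn|jn].
  have hi : (j.-1 < N - 2)%N by lia.
  have -> : wc w j.-1 = w ord0 (Ordinal hi) by rewrite -wcE.
  have -> : W0f j = w0 ord0 (Ordinal hi) by rewrite mxE /=; congr W0f; lia.
  by rewrite distrC ltW // ball_coord.
case: eqP => [->|/eqP jn1]; first by rewrite W0fn subrr normr0 ltW.
have -> : j = N by lia.
by rewrite W0fN subrr normr0 ltW.
Qed.

Lemma box_Wpos (w : 'rV[R]_(N - 2)) : ball w0 eps w ->
  forall j, (0 < j <= N)%N -> 0 < Wf w j.
Proof.
move=> hb j hj; move/andP: (hj) => [_ jN].
have := Wf_near w hb j jN; rewrite ler_norml => /andP [h1 h2].
have := W0f_ge1 j hj; have := nr_ge1 => hnr.
have : eps <= 1 / 8.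
  rewrite /eps ler_pdivrMr; last by nra.
  rewrite mul1r; rewrite ler_pdivlMl // ; nra.
lra.
Qed.

Lemma box_conc (w : 'rV[R]_(N - 2)) : ball w0 eps w ->
  forall k, (k < N - 1)%N -> Wf w k + Wf w k.+2 <= 2 * Wf w k.+1.
Proof.
move=> hb k hk.
have := Wf_near w hb k (ltac:(lia)); rewrite ler_norml => /andP [a1 a2].
have := Wf_near w hb k.+1 (ltac:(lia)); rewrite ler_norml => /andP [b1 b2].
have := Wf_near w hb k.+2 (ltac:(lia)); rewrite ler_norml => /andP [c1 c2].
have := W0f_conc k; have := nr_ge1 => hnr.
have he : 4 * eps = 1 / (nr * (nr + 1)) by rewrite /eps; field; nra.
have : 0 < 1 / (nr * (nr + 1)) by apply: divr_gt0 => //; nra.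
have -> : - 2 / (nr * (nr + 1)) = - 2 * (1 / (nr * (nr + 1))) by rewrite mulrA mulr1.
lra.
Qed.

End Box.

End Fam.

Arguments Wf {R N}. Arguments Dn {R N}. Arguments Cf {R N}. Arguments hf {R N}. Arguments Phi {R N}. Arguments wc {R N}.
Section E.
Variables (R : realType) (N : nat).
Lemma Wf_cont j : continuous (fun w : 'rV[R]_(N - 2) => Wf w j).
Proof.
rewrite /Wf; case: eqP => _; first exact: cst_continuous.
case: ltnP => _; last by case: eqP => _; exact: cst_continuous.
rewrite /wc; case: (insub j.-1) => [i|]; last exact: cst_continuous.
exact: coord_continuous.
Qed.

Lemma sumW_cont k : continuous (fun w : 'rV[R]_(N - 2) => \sum_(i < k) Wf w i).
Proof.
elim: k => [|k IH].
  under [fun w => _]funext => w do rewrite big_ord0.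
  exact: cst_continuous.
under [fun w => _]funext => w do rewrite big_ord_recr /=.
move=> x; exact: (continuousD (IH x) (Wf_cont k x)).
Qed.

Lemma Dn_cont k j : continuous (fun w : 'rV[R]_(N - 2) => Dn w k j).
Proof.
rewrite /Dn; case: eqP => _.
  move=> x.
  have := continuousB (@cst_continuous _ _ ((k * k.+1)%:R / 2 : R) x) (sumW_cont k x).
  exact.
case: ltnP => _; [exact: Wf_cont | exact: cst_continuous].
Qed.
Lemma Cf_cont (w : 'rV[R]_(N - 2)) k j : (k != 0%N -> Wf w k != 0) ->
  {for w, continuous (fun w => Cf w k j)}.
Proof.
move=> Wk; rewrite /Cf; case: (k =P 0%N) => [_|/eqP k0]; first exact: cst_continuous.
move: (Wk k0) => {}Wk.
have := continuousM (Dn_cont k j w) (continuousV (s := fun z => Wf z k) (x := w) Wk (Wf_cont k w)).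
exact.
Qed.

Lemma mx_cont_entries (T : topologicalType) m p (F : T -> 'M[R]_(m, p)) x :
  (forall i j, {for x, continuous (fun z => F z i j)}) -> {for x, continuous F}.
Proof.
move=> Hc A /nbhs_ballP [e e0 eA].
have : \forall z \near x, forall ij : 'I_m * 'I_p, ball (F x ij.1 ij.2) e (F z ij.1 ij.2).
  apply: filter_forall => -[i j] /=.
  exact: (Hc i j _ (nbhsx_ballx _ _ e0)).
apply: filterS => z Hz; apply: eA; split => // i j; exact: (Hz (i, j)).
Qed.

Lemma Phi_cont (w : 'rV[R]_(N - 2)) :
  (forall k, (0 < k <= N - 1)%N -> Wf w k != 0) -> {for w, continuous Phi}.
Proof.
move=> Wnz; apply: mx_cont_entries => i j.
have hi := ltn_ord i.
have H1 : {for w, continuous (fun z => Cf z i.+1 j)}.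
  by apply: Cf_cont => _; apply: Wnz; apply/andP; split; lia.
have H2 : {for w, continuous (fun z => Cf z i j)}.
  by apply: Cf_cont => /eqP k0; apply: Wnz; apply/andP; split; lia.
have E : (fun z : 'rV[R]_(N - 2) => Phi z i j) = (fun z => Cf z i.+1 j - Cf z i j).
  by apply: funext => z; rewrite mxE.
rewrite E; have := continuousB H1 H2; exact.
Qed.

Lemma Phi_inj (hN : (2 <= N)%N) (w1 w2 : 'rV[R]_(N - 2)) : Phi w1 = Phi w2 -> w1 = w2.
Proof.
move=> E; apply/rowP => i.
have hj : (i.+1 < N - 1)%N by have := ltn_ord i; lia.
have colE : forall w : 'rV[R]_(N - 2), \sum_(k < N - 1) Phi w k (Ordinal hj) = w ord0 i / N%:R.
  move=> w.
  under eq_bigr => k _ do rewrite mxE /hf.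
  have := telescope_sumr (fun k => Cf w k i.+1) (leq0n (N - 1)); rewrite big_mkord => ->.
  rewrite {2}/Cf eqxx subr0 /Cf.
  have -> : (N - 1 == 0)%N = false by apply/negbTE; apply/eqP; lia.
  rewrite /Dn /= hj (WfN1 R N w hN) /Wf /=.
  by have -> : (i.+1 < N - 1)%N = true by []; rewrite (wcE R N).
have := colE w1; rewrite E colE => /(congr1 (fun x => x * N%:R)).
have NR : (N%:R : R) != 0 by rewrite pnatr_eq0; apply/eqP; lia.
by rewrite !divfK.
Qed.

Lemma ball_convex (hN : (2 <= N)%N) : convex_rV (ball (w0 R N) (eps R N)).
Proof.
move=> x z t hx hz t0 t1; have e0 := eps_gt0 R N hN.
split => // i j; rewrite (ord1 i).
have hx' := ball_coord R N x hx j; have hz' := ball_coord R N z hz j.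
have key : `|w0 R N ord0 j - (t * x ord0 j + (1 - t) * z ord0 j)| < eps R N.
  rewrite (_ : _ - _ = t * (w0 R N ord0 j - x ord0 j) + (1 - t) * (w0 R N ord0 j - z ord0 j)); last by ring.
  apply: le_lt_trans (ler_normD _ _) _.
  rewrite !normrM (ger0_norm t0) (ger0_norm (_ : 0 <= 1 - t)) ?subr_ge0 //.
  set a := `|_ - x ord0 j| in hx' *; set b := `|_ - z ord0 j| in hz' *.
  have h2 : (1 - t) * b <= (1 - t) * eps R N by apply: ler_wpM2l; [lra | exact: ltW].
  have [tz|tp] := eqVneq t 0.
    by rewrite tz mul0r add0r subr0 mul1r.
  have tp' : 0 < t by rewrite lt_def tp t0.
  have h1 : t * a < t * eps R N by rewrite ltr_pM2l.
  lra.
move: key; rewrite !mxE; exact.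
Qed.

End E.

Theorem theorem4p1 (R : realType) (N : nat) (hN : (2 <= N)%N) :
  exists (C : set 'rV[R]_(N - 2)) (Phi : 'rV[R]_(N - 2) -> 'M[R]_(N - 1)),
    [/\ C !=set0, open C, convex_rV C,
        {within C, continuous Phi} /\ {in C &, injective Phi} &
        forall w, C w ->
          lower_triangular (Phi w) /\
          forall (d : nat) (T : 'rV[R]_d -> 'rV[R]_d) (y : nat -> 'rV[R]_d)
                 (ystar : 'rV[R]_d),
            (0 < d)%N -> nonexpansive T -> T ystar = ystar ->
            (forall k : 'I_(N - 1),
               y k.+1 = y k - \sum_(j < N - 1 | (j <= k)%N)
                                 Phi w k j *: (y j - T (y j))) ->
            sqnorm (y (N - 1)%N - T (y (N - 1)%N))
              <= 4 * sqnorm (y 0%N - ystar) / (N%:R ^+ 2)].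
Proof.
exists (ball (w0 R N) (eps R N)), (@Phi R N).
have e0 := eps_gt0 R N hN.
split.
- by exists (w0 R N); apply: ballxx.
- exact: ball_open.
- exact: ball_convex.
- split.
  + apply: continuous_in_subspaceT => w; rewrite in_setE => hw.
    apply: Phi_cont => k /andP [k0 kn]; rewrite gt_eqF //.
    by apply: (box_Wpos R N hN w hw); rewrite k0 /=; lia.
  + by move=> w1 w2 _ _; apply: Phi_inj.
- move=> w hw; split.
  + by move=> i j ij; rewrite mxE; apply: hf_up.
  + move=> d T y ys _ hT hfix hrec.
    exact: (core R N w hN (box_Wpos R N hN w hw) (box_conc R N hN w hw) d T y ys hT hfix hrec).
Qed.
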